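(* Let $\mathbf m\in M_{(b_i);(c_j)}$, let $i\in[1,n]$, $j\in[1,n']$ and let $a\in B_i$ with $w_{\mathbf m}(a)\in C_j$. Let $\mathbf e$ be the $n\times n'$ matrix with $e_{i,j}=1$ and all other entries $0$, so that $\mathbf m-\mathbf e\in M_{(\tilde b_{i'});(\tilde c_{j'})}$ where $\tilde b_{i'}=b_{i'}-\delta_{i,i'}$, $\tilde c_{j'}=c_{j'}-\delta_{j,j'}$. Then (1) $w_{\mathbf m}^{\hat a}=w_{\mathbf m-\mathbf e}$ (the latter defined in $S_{d-1}$ with respect to the tuples $(\tilde b_{i'}),(\tilde c_{j'})$); (2) $\ell(\mathbf m)-\ell(\mathbf m-\mathbf e)$ equals each of $m_{\le i,\ge j}+m_{\ge i,\le j}-m_{i,j}-1$, $\;m_{\le i-1,\ge j}+m_{\ge i+1,\le j}+b_i-1$, and $\;m_{\le i,\ge j+1}+m_{\ge i,\le j-1}+c_j-1$.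
   Context: Let $d\ge1$ and let $(b_i)_{i\in[1,n]}$, $(c_j)_{j\in[1,n']}$ be tuples of nonnegative integers each summing to $d$. $M_{(b_i);(c_j)}$ is the set of $n\times n'$ matrices with entries in $\mathbb N$, row sums $b_i$ and column sums $c_j$. Partial sums: $m_{\le i,\ge j}=\sum_{i'\le i,\,j'\ge j}m_{i',j'}$, $m_{\ge i,\le j}=\sum_{i'\ge i,\,j'\le j}m_{i',j'}$ (empty sums are $0$). Partition $[1,d]$ into consecutive (possibly empty) intervals $B_1<\dots<B_n$ with $|B_i|=b_i$ and $C_1<\dots<C_{n'}$ with $|C_j|=c_j$. $S_d$ is the symmetric group (Coxeter generators adjacent transpositions, length $\ell$). With $S_{(b_i)},S_{(c_j)}$ the subgroups preserving each $B_i$, resp. each $C_j$, the map $\psi(w)_{i,j}=|w(B_i)\cap C_j|$ induces a bijection $S_{(c_j)}\backslash S_d/S_{(b_i)}\to M_{(b_i);(c_j)}$; $w_{\mathbf m}$ is the longest element of the double coset corresponding to $\mathbf m$, and $\ell(\mathbf m)=\ell(w_{\mathbf m})$. For $a\in[1,d]$ let $\sigma_a:[1,d]\setminus\{a\}\to[1,d-1]$ be the order-preserving bijection, and for $w\in S_d$ set $w^{\hat a}=\sigma_{w(a)}\circ w\circ\sigma_a^{-1}\in S_{d-1}$. *)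

(* Defs.v *)
(* Indices are 0-based: [1,n] is 'I_n, [1,d] is 'I_d. *)
From mathcomp Require Import all_boot all_order all_algebra fingroup perm.
Set Implicit Arguments. Unset Strict Implicit. Unset Printing Implicit Defensive.

Definition bstart (n : nat) (b : 'I_n -> nat) (i : 'I_n) : nat :=
  \sum_(k < n | (k < i)%N) b k.

Definition Bset (D n : nat) (b : 'I_n -> nat) (i : 'I_n) : {set 'I_D} :=
  [set x : 'I_D | (bstart b i <= x)%N && (x < bstart b i + b i)%N].

Definition inM (n n' : nat) (b : 'I_n -> nat) (c : 'I_n' -> nat)
  (m : 'M[nat]_(n, n')) : Prop :=
  (forall i, \sum_(j < n') m i j = b i) /\ (forall j, \sum_(i < n) m i j = c j).

Definition psi (D n n' : nat) (b : 'I_n -> nat) (c : 'I_n' -> nat)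
  (w : {perm 'I_D}) : 'M[nat]_(n, n') :=
  \matrix_(i < n, j < n') #|[set x in Bset D b i | w x \in Bset D c j]|.

(* Coxeter length in S_D w.r.t. adjacent transpositions = number of inversions *)
Definition ell (D : nat) (w : {perm 'I_D}) : nat :=
  #|[set p : 'I_D * 'I_D | (p.1 < p.2)%N && (w p.2 < w p.1)%N]|.

(* w is the longest element of the double coset S_(c) \ S_D / S_(b)
   corresponding to m, i.e. of the fibre psi^{-1}(m) *)
Definition longest (D n n' : nat) (b : 'I_n -> nat) (c : 'I_n' -> nat)
  (m : 'M[nat]_(n, n')) (w : {perm 'I_D}) : Prop :=
  psi b c w = m /\ forall w' : {perm 'I_D}, psi b c w' = m -> (ell w' <= ell w)%N.

(* w^{hat a} = sigma_{w a} o w o sigma_a^{-1}; sigma_a^{-1} = lift a,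
   sigma_{w a} = unlift (w a) on the complement of w a *)
Definition hatf (d : nat) (w : {perm 'I_d.+1}) (a : 'I_d.+1) (x : 'I_d) : 'I_d :=
  odflt x (unlift (w a) (w (lift a x))).

Lemma hatf_inj (d : nat) (w : {perm 'I_d.+1}) (a : 'I_d.+1) : injective (hatf w a).
Proof.
have H z : w (lift a z) = lift (w a) (hatf w a z).
  rewrite /hatf.
  have ne : w a != w (lift a z) by rewrite (inj_eq perm_inj) neq_lift.
  by case: (unlift_some ne) => k -> ->.
move=> x y Exy; apply: (@lift_inj _ a).
have E : w (lift a x) = w (lift a y) by rewrite (H x) (H y) Exy.
exact: (perm_inj E).
Qed.

Definition hat (d : nat) (w : {perm 'I_d.+1}) (a : 'I_d.+1) : {perm 'I_d} :=
  perm (@hatf_inj d w a).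

Definition msum (n n' : nat) (m : 'M[nat]_(n, n')) (P : pred 'I_n) (Q : pred 'I_n') : nat :=
  \sum_(i < n | P i) \sum_(j < n' | Q j) m i j.

Definition mminus (n n' : nat) (m : 'M[nat]_(n, n')) (i : 'I_n) (j : 'I_n') : 'M[nat]_(n, n') :=
  \matrix_(i' < n, j' < n') (m i' j' - ((i' == i) && (j' == j)))%N.

Definition tdec (n : nat) (b : 'I_n -> nat) (i : 'I_n) : 'I_n -> nat :=
  fun i' => (b i' - (i' == i))%N.

(* Main.v *)
Require Import Defs.
From mathcomp Require Import all_boot all_order all_algebra fingroup perm zify.
Set Implicit Arguments. Unset Strict Implicit. Unset Printing Implicit Defensive.


Definition bn (D n : nat) (b : 'I_n -> nat) (x : 'I_D) : nat :=
  oapp (@nat_of_ord n) n [pick i | x \in Bset D b i].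

Lemma bstartS n (b : 'I_n -> nat) (i : 'I_n) :
  bstart b i + b i = \sum_(k < n | (k < i.+1)%N) b k.
Proof.
rewrite /bstart [X in _ = X](bigD1 i) /= ?ltnSn // addnC; congr (_ + _).
apply: eq_bigl => k /=; rewrite ltnS -val_eqE /=.
by rewrite ltn_neqAle andbC.
Qed.

Lemma bstart_mono n (b : 'I_n -> nat) (i i' : 'I_n) :
  (i < i')%N -> (bstart b i + b i <= bstart b i')%N.
Proof.
move=> H; rewrite bstartS /bstart; apply: (@sub_le_big _ addn leq leqnn (fun x y => leq_addr y x)) => k /= h.
exact: leq_trans h H.
Qed.

Lemma bstart_tot n (b : 'I_n -> nat) (i : 'I_n) :
  (bstart b i + b i <= \sum_(k < n) b k)%N.
Proof. by rewrite bstartS; apply: (@sub_le_big _ addn leq leqnn (fun x y => leq_addr y x)). Qed.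

Lemma B_order D n (b : 'I_n -> nat) (i i' : 'I_n) (x y : 'I_D) :
  x \in Bset D b i -> y \in Bset D b i' -> (i < i')%N -> (x < y)%N.
Proof.
rewrite !inE => /andP[_ h1] /andP[h2 _] /(bstart_mono b) h3; lia.
Qed.

Lemma transition (P : nat -> bool) n : P 0 -> ~~ P n -> exists2 k, (k < n)%N & P k && ~~ P k.+1.
Proof.
move=> P0; elim: n => [|n IH] Pn; first by rewrite P0 in Pn.
case Pn': (P n); first by exists n => //; rewrite Pn' Pn.
by have [k kn Hk] := IH (negbT Pn'); exists k => //; apply: ltnW.
Qed.

Lemma B_cover D n (b : 'I_n -> nat) : (\sum_(k < n) b k)%N = D ->
  forall x : 'I_D, exists i, x \in Bset D b i.
Proof.
move=> hb x.
pose P k := (\sum_(i' < n | (i' < k)%N) b i' <= x)%N.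
have P0 : P 0 by rewrite /P big1.
have Pn : ~~ P n by rewrite /P -ltnNge (eq_bigl xpredT) ?hb // => i'; rewrite ltn_ord.
have [k kn /andP[H1 H2]] := transition P0 Pn.
exists (Ordinal kn); rewrite inE; apply/andP; split => //.
by rewrite bstartS ltnNge.
Qed.

Lemma memB D n (b : 'I_n -> nat) (x : 'I_D) (i : 'I_n) : (\sum_(k < n) b k)%N = D ->
  (x \in Bset D b i) = (bn b x == i).
Proof.
move=> hb; rewrite /bn; case: pickP => [i' Hi' | H] /=.
  apply/idP/eqP => [Hi | e]; last by rewrite (val_inj e) in Hi'.
  case: (ltngtP i' i) => h.
  - by have := B_order Hi' Hi h; rewrite ltnn.
  - by have := B_order Hi Hi' h; rewrite ltnn.
  - by [].
have [i0 Hi0] := B_cover hb x; by rewrite H in Hi0.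
Qed.

Lemma bn_lt D n (b : 'I_n -> nat) (x : 'I_D) : (\sum_(k < n) b k)%N = D -> (bn b x < n)%N.
Proof.
move=> hb; have [i0 Hi0] := B_cover hb x.
by rewrite (memB _ _ hb) in Hi0; rewrite (eqP Hi0).
Qed.

Lemma bn_mono D n (b : 'I_n -> nat) (x y : 'I_D) : (\sum_(k < n) b k)%N = D ->
  (x <= y)%N -> (bn b x <= bn b y)%N.
Proof.
move=> hb xy; rewrite leqNgt; apply/negP => h.
have Hx : x \in Bset D b (Ordinal (bn_lt x hb)) by rewrite (memB _ _ hb).
have Hy : y \in Bset D b (Ordinal (bn_lt y hb)) by rewrite (memB _ _ hb).
have := B_order Hy Hx h; lia.
Qed.

Lemma card_setsum (T : finType) (P : pred T) : #|[set x | P x]| = (\sum_x P x)%N.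
Proof.
rewrite -sum1_card big_mkcond /=; apply: eq_bigr => x _; rewrite inE.
by case: (P x).
Qed.

Lemma sum_ind_ord n k (P : pred nat) (g : nat) : (k < n)%N ->
  (\sum_(i' < n | P i') (if k == i' then g else 0))%N = if P k then g else 0.
Proof.
move=> kn; case: (boolP (P k)) => Pk.
  rewrite (bigD1 (Ordinal kn)) //= eqxx big1 ?addn0 // => i' /andP[_ ne].
  case: eqP => // e; case/eqP: ne; exact: val_inj.
by rewrite big1 // => i' Pi'; case: eqP => // e; rewrite e Pi' in Pk.
Qed.

Lemma psiE D n n' (b : 'I_n -> nat) (c : 'I_n' -> nat) (w : {perm 'I_D}) i j :
  (\sum_(k < n) b k)%N = D -> (\sum_(k < n') c k)%N = D ->
  psi b c w i j = (\sum_x ((bn b x == i) && (bn c (w x) == j)))%N.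
Proof.
move=> hb hc; rewrite /psi mxE -card_setsum; apply: eq_card => x.
by rewrite [in RHS]inE -(memB _ _ hb) -(memB _ _ hc) !inE.
Qed.

Lemma msumE D n n' (b : 'I_n -> nat) (c : 'I_n' -> nat) (w : {perm 'I_D}) (P Q : pred nat) :
  (\sum_(k < n) b k)%N = D -> (\sum_(k < n') c k)%N = D ->
  msum (psi b c w) (fun i => P i) (fun j => Q j) = (\sum_x (P (bn b x) && Q (bn c (w x))))%N.
Proof.
move=> hb hc; rewrite /msum.
have E i' j' := psiE w i' j' hb hc.
rewrite (eq_bigr (fun i' : 'I_n => \sum_(j' < n' | Q j') \sum_x ((bn b x == i') && (bn c (w x) == j')))%N); last by move=> i' _; apply: eq_bigr => j' _; exact: E.
under eq_bigr do rewrite exchange_big.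
rewrite exchange_big; apply: eq_bigr => x _.
rewrite (eq_bigr (fun i' : 'I_n => if bn b x == i' then (if Q (bn c (w x)) then 1 else 0) else 0)%N).
  rewrite sum_ind_ord ?bn_lt //.
  by case: (P _); case: (Q _).
move=> i' _; case: eqP => e.
  rewrite (eq_bigr (fun j' : 'I_n' => if bn c (w x) == j' then 1 else 0)%N).
    by rewrite sum_ind_ord ?bn_lt.
  by move=> j' _; case: eqP.
by rewrite big1 // => j' _; move/eqP/negbTE: e => ->.
Qed.

Local Open Scope group_scope.

Definition good D n n' (b : 'I_n -> nat) (c : 'I_n' -> nat) (w : {perm 'I_D}) :=
  forall x y : 'I_D, (x < y)%N -> (bn b x = bn b y \/ bn c (w x) = bn c (w y)) -> (w y < w x)%N.

Lemma ell_inv D (w : {perm 'I_D}) : ell w^-1 = ell w.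
Proof.
pose g (pq : 'I_D * 'I_D) := (w pq.2, w pq.1).
have ginj : injective g.
  by move=> [p q] [p' q'] [/perm_inj -> /perm_inj ->].
rewrite /ell -(card_preimset _ ginj); apply: eq_card => [[p q]].
by rewrite !inE /= !permK andbC.
Qed.

Lemma psi_inv D n n' (b : 'I_n -> nat) (c : 'I_n' -> nat) (w : {perm 'I_D}) :
  psi c b w^-1 = trmx (psi b c w).
Proof.
apply/matrixP => i0 j0; rewrite !mxE -(card_preimset _ (@perm_inj _ w)).
apply: eq_card => u; rewrite !inE permK.
by rewrite -!andbA; do 2 case: (_ <= _)%N; rewrite ?andbF ?andbT ?andFb ?andTb // andbC.
Qed.

Lemma longest_inv D n n' (b : 'I_n -> nat) (c : 'I_n' -> nat) m (w : {perm 'I_D}) :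
  longest b c m w -> longest c b (trmx m) w^-1.
Proof.
move=> [Hp Hl]; split; first by rewrite psi_inv Hp.
move=> w2 H2; rewrite ell_inv -(ell_inv w2); apply: Hl.
by rewrite -[w2]invgK psi_inv invgK H2 trmxK.
Qed.

Lemma ord_eqE n (x y : 'I_n) : (x == y) = (nat_of_ord x == nat_of_ord y).
Proof. by []. Qed.

Lemma tperm_lt D (K K' p q : 'I_D) : nat_of_ord K' = (nat_of_ord K).+1 -> (p < q)%N ->
  ~~ ((p == K) && (q == K')) -> (tperm K K' p < tperm K K' q)%N.
Proof.
move=> hK pq; rewrite !ord_eqE => H.
case: tpermP => [ep|ep|hp1 hp2]; case: tpermP => [eq|eq|hq1 hq2]; subst => //=.
all: repeat match goal with | H : is_true (?x != ?y) |- _ => move: H; rewrite ord_eqE => /eqP H end.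
all: move: H; rewrite ?eqxx /=; try lia.
all: rewrite ?andbT; (try case/nandP); move=> /eqP ?; lia.
Qed.

Lemma ell_adj D (w : {perm 'I_D}) (K K' : 'I_D) : nat_of_ord K' = (nat_of_ord K).+1 ->
  (w K < w K')%N -> ell (tperm K K' * w) = (ell w).+1.
Proof.
move=> hK hw; set s := tperm K K'.
pose f (pq : 'I_D * 'I_D) := (s pq.1, s pq.2).
have finj : injective f by move=> [p q] [p' q'] [/perm_inj -> /perm_inj ->].
have E : [set pq : 'I_D * 'I_D | (pq.1 < pq.2)%N && ((s * w)%g pq.2 < (s * w)%g pq.1)%N]
   = (K, K') |: (f @^-1: [set pq : 'I_D * 'I_D | (pq.1 < pq.2)%N && (w pq.2 < w pq.1)%N]).
  apply/setP => [[p q]]; rewrite !inE /= !permM xpair_eqE.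
  case: (boolP ((p == K) && (q == K'))) => [/andP[/eqP -> /eqP ->] | H] /=.
    by rewrite /s tpermL tpermR hK ltnSn hw.
  apply/idP/idP => [/andP[pq h] | /andP[spq h]]; apply/andP; split => //.
    exact: tperm_lt.
  case: (boolP ((s p == K) && (s q == K'))) => [/andP[/eqP e1 /eqP e2] | H2].
    by rewrite e1 e2 in h; have := ltn_trans h hw; rewrite ltnn.
  by have := tperm_lt hK spq H2; rewrite !tpermK.
rewrite /ell E cardsU1 card_preimset // !inE /= /s tpermL tpermR.
by rewrite hK ltnNge leqW.
Qed.

Lemma ascent (f : nat -> nat) x y : (x < y)%N -> (f x < f y)%N ->
  exists k, [/\ (x <= k)%N, (k < y)%N & (f k < f k.+1)%N].
Proof.
elim: y => [//|y IH] xy fxy.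
case: (ltnP (f y) (f y.+1)) => h; first by exists y; split => //.
have xy' : (x < y)%N.
  rewrite ltn_neqAle -ltnS xy andbT; apply/eqP => e; subst y.
  by have := leq_ltn_trans h fxy; rewrite ltnn.
have [k [h1 h2 h3]] := IH xy' (leq_trans fxy h); exists k; split => //.
exact: ltnW.
Qed.

Lemma psi_tperm D n n' (b : 'I_n -> nat) (c : 'I_n' -> nat) (w : {perm 'I_D}) (K K' : 'I_D) :
  (\sum_(k < n) b k)%N = D -> (\sum_(k < n') c k)%N = D ->
  bn b K = bn b K' -> psi b c (tperm K K' * w) = psi b c w.
Proof.
move=> hb hc e; apply/matrixP => i0 j0; rewrite !psiE //.
rewrite (reindex_inj (@perm_inj _ (tperm K K'))) /=; apply: eq_bigr => x _.
rewrite permM tpermK; congr (_ && _); congr (_ == _).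
by case: tpermP => [->|->|].
Qed.

Lemma longest_desc D n n' (b : 'I_n -> nat) (c : 'I_n' -> nat) m (w : {perm 'I_D}) :
  (\sum_(k < n) b k)%N = D -> (\sum_(k < n') c k)%N = D ->
  longest b c m w -> forall x y : 'I_D, (x < y)%N -> bn b x = bn b y -> (w y < w x)%N.
Proof.
move=> hb hc [Hp Hl] x y xy e; rewrite ltnNge; apply/negP => h.
have h' : (w x < w y)%N.
  rewrite ltn_neqAle h andbT; apply/eqP => /val_inj/perm_inj e'.
  by subst; rewrite ltnn in xy.
pose f k := nat_of_ord (w (insubd x k)).
have [k [h1 h2 h3]] := @ascent f x y xy ltac:(by rewrite /f !valKd).
have kD : (k < D)%N by apply: ltn_trans h2 (ltn_ord y).
have k1D : (k.+1 < D)%N by apply: leq_ltn_trans h2 (ltn_ord y).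
pose K := insubd x k : 'I_D; pose K' := insubd x k.+1 : 'I_D.
have vK : nat_of_ord K = k by rewrite /K val_insubd kD.
have vK' : nat_of_ord K' = k.+1 by rewrite /K' val_insubd k1D.
have bK : bn b K = bn b K'.
  have m1 := bn_mono hb (_ : (nat_of_ord x <= nat_of_ord K)%N).
  have m2 := bn_mono hb (_ : (nat_of_ord K <= nat_of_ord K')%N).
  have m3 := bn_mono hb (_ : (nat_of_ord K' <= nat_of_ord y)%N).
  have := m1 ltac:(by rewrite vK); have := m2 ltac:(by rewrite vK vK');
  have := m3 ltac:(by rewrite vK'); lia.
have := Hl (tperm K K' * w) ltac:(by rewrite psi_tperm).
rewrite ell_adj ?ltnn // vK' vK //.
Qed.

Lemma longest_good D n n' (b : 'I_n -> nat) (c : 'I_n' -> nat) m (w : {perm 'I_D}) :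
  (\sum_(k < n) b k)%N = D -> (\sum_(k < n') c k)%N = D ->
  longest b c m w -> good b c w.
Proof.
move=> hb hc L x y xy [e|e]; first exact: (longest_desc hb hc L xy e).
rewrite ltnNge; apply/negP => h.
have h' : (w x < w y)%N.
  rewrite ltn_neqAle h andbT; apply/eqP => /val_inj/perm_inj e'.
  by subst; rewrite ltnn in xy.
have := longest_desc hc hb (longest_inv L) h' e.
by rewrite !permK => /(ltn_trans xy); rewrite ltnn.
Qed.

Lemma good_J D n n' (b : 'I_n -> nat) (c : 'I_n' -> nat) (w : {perm 'I_D}) :
  (\sum_(k < n') c k)%N = D -> good b c w ->
  forall x y : 'I_D, (x < y)%N -> bn b x = bn b y -> (bn c (w y) <= bn c (w x))%N.
Proof. by move=> hc G x y xy e; apply: bn_mono hc _; apply: ltnW; exact: (G x y xy (or_introl e)). Qed.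

Lemma good_lt D n n' (b : 'I_n -> nat) (c : 'I_n' -> nat) (w : {perm 'I_D}) :
  (\sum_(k < n') c k)%N = D -> good b c w ->
  forall x y : 'I_D, x != y -> (w y < w x)%N =
    (bn c (w y) < bn c (w x))%N || ((bn c (w y) == bn c (w x)) && (x < y)%N).
Proof.
move=> hc G x y ne; apply/idP/idP.
  move=> h; have := bn_mono hc (ltnW h); rewrite leq_eqVlt => /orP[/eqP e| -> //].
  rewrite e eqxx ltnn /=; case: (ltngtP x y) => // yx.
    by have := G y x yx (or_intror e) => /(ltn_trans h); rewrite ltnn.
  by case/eqP: ne; apply: val_inj.
case/orP => [lt | /andP[/eqP e xy]].
  rewrite ltnNge; apply/negP => le; have := bn_mono hc le; by rewrite leqNgt lt.
exact: (G x y xy (or_intror (esym e))).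
Qed.

Lemma card_below D k : (k <= D)%N -> (\sum_(z < D) (z < k)%N)%N = k.
Proof.
elim: k => [|k IH] h; first by rewrite big1.
rewrite (eq_bigr (fun z : 'I_D => (z < k)%N + (if k == z then 1 else 0)))%N; last first.
  by move=> z _; rewrite ltnS leq_eqVlt eq_sym; case: eqP => [->|]; rewrite ?ltnn ?addn0 ?add0n.
rewrite big_split /= IH ?(ltnW h) //.
by rewrite (@sum_ind_ord D k xpredT 1) // addn1.
Qed.

Lemma perm_val_count D (w : {perm 'I_D}) x : nat_of_ord (w x) = (\sum_y (w y < w x)%N)%N.
Proof.
by rewrite -{1}(card_below (ltnW (ltn_ord (w x)))) (reindex_inj (@perm_inj _ w)).
Qed.



Lemma J_le D n n' (b : 'I_n -> nat) (c : 'I_n' -> nat) (w1 w2 : {perm 'I_D}) :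
  (\sum_(k < n) b k)%N = D -> (\sum_(k < n') c k)%N = D ->
  good b c w1 -> good b c w2 -> psi b c w1 = psi b c w2 ->
  forall x, (bn c (w2 x) <= bn c (w1 x))%N.
Proof.
move=> hb hc G1 G2 E x; rewrite leqNgt; apply/negP => lt.
set i := bn b x; set j := bn c (w2 x).
pose S1 := [set y | (bn b y == i) && (j <= bn c (w1 y))%N].
pose S2 := [set y | (bn b y == i) && (j <= bn c (w2 y))%N].
have cardE : #|S1| = #|S2|.
  rewrite /S1 /S2 !card_setsum.
  have e1 := msumE w1 (fun k => k == i) (fun k => j <= k)%N hb hc.
  have e2 := msumE w2 (fun k => k == i) (fun k => j <= k)%N hb hc.
  rewrite E in e1; exact: (etrans (esym e1) e2).
have x2 : x \in S2 by rewrite inE eqxx leqnn.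
have x1 : x \notin S1 by rewrite inE eqxx /= -ltnNge.
have : ~~ (S1 \subset S2).
  apply/negP => sub; have : S1 == S2 by rewrite eqEcard sub cardE leqnn.
  by move/eqP => eS; rewrite eS x2 in x1.
case/subsetPn => y; rewrite !inE => /andP[/eqP ey jy1].
rewrite ey eqxx /= -ltnNge => y2.
move: ey jy1 y2; rewrite /i /j => ey jy1 y2; clear x1 x2 cardE S1 S2; clear i j.
case: (ltngtP x y) => h.
- have H := good_J hc G1 h (esym ey).
  by have := leq_trans (leq_ltn_trans H lt) jy1; rewrite ltnn.
- have H := good_J hc G2 h ey.
  by have := leq_ltn_trans H y2; rewrite ltnn.
- have e : x = y by apply: val_inj.
  by subst; have := leq_ltn_trans jy1 lt; rewrite ltnn.
Qed.

Lemma good_uniq D n n' (b : 'I_n -> nat) (c : 'I_n' -> nat) (w1 w2 : {perm 'I_D}) :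
  (\sum_(k < n) b k)%N = D -> (\sum_(k < n') c k)%N = D ->
  good b c w1 -> good b c w2 -> psi b c w1 = psi b c w2 -> w1 = w2.
Proof.
move=> hb hc G1 G2 E.
have Jeq z : bn c (w1 z) = bn c (w2 z).
  by apply/eqP; rewrite eqn_leq !(J_le hb hc) //; apply: esym.
apply/permP => x; apply: val_inj => /=.
rewrite (perm_val_count w1 x) (perm_val_count w2 x); apply: eq_bigr => y _.
case: (eqVneq x y) => [->|ne]; first by rewrite !ltnn.
by rewrite (good_lt hc G1 ne) (good_lt hc G2 ne) !Jeq.
Qed.


Lemma sum_eq_ord n (i : 'I_n) (P : pred nat) :
  (\sum_(k < n | P k) ((k == i) : nat))%N = P i.
Proof.
transitivity (if P i then 1 else 0)%N; last by case: (P i).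
rewrite -(@sum_ind_ord n i P 1) //.
by apply: eq_bigr => k _; rewrite ord_eqE eq_sym; case: (_ == _).
Qed.

Lemma tdec_sum n (b : 'I_n -> nat) (i : 'I_n) d :
  (\sum_(k < n) b k)%N = d.+1 -> (0 < b i)%N -> (\sum_(k < n) tdec b i k)%N = d.
Proof.
move=> hb bi.
have : (\sum_(k < n) (tdec b i k + (k == i)))%N = d.+1.
  rewrite -hb; apply: eq_bigr => k _; rewrite /tdec subnK //.
  by case: eqP => [->|] //.
rewrite big_split /= (@sum_eq_ord n i xpredT) /= addn1; by case.
Qed.

Lemma bstart_tdec n (b : 'I_n -> nat) (i k : 'I_n) : (0 < b i)%N ->
  bstart (tdec b i) k = (bstart b k - (i < k))%N.
Proof.
move=> bi.
have : (bstart b k = \sum_(k' < n | (k' < k)%N) (tdec b i k' + (k' == i)))%N.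
  rewrite /bstart; apply: eq_bigr => k' _; rewrite /tdec subnK //.
  by case: eqP => [->|] //.
by rewrite big_split /= (@sum_eq_ord n i (fun k' => k' < k)%N) /= => ->; rewrite addnK.
Qed.

Lemma mem_tdec d n (b : 'I_n -> nat) (i k : 'I_n) (a : 'I_d.+1) (z : 'I_d) :
  a \in Bset d.+1 b i ->
  (z \in Bset d (tdec b i) k) = (lift a z \in Bset d.+1 b k).
Proof.
rewrite !inE => /andP[a1 a2].
have bi : (0 < b i)%N by lia.
rewrite bstart_tdec // /tdec /= /bump ord_eqE.
have zd := ltn_ord z.
have ad := ltn_ord a.
case: (ltngtP k i) => [hk|hk|/val_inj hk].
- have := bstart_mono b hk.
  move=> H; rewrite ?subn0 ?subn1; case: (leqP a z) => az /=; rewrite ?add0n ?add1n;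
    apply/andP/andP => -[h1 h2]; split; lia.
- have := bstart_mono b hk.
  move=> H; rewrite ?subn0 ?subn1; case: (leqP a z) => az /=; rewrite ?add0n ?add1n;
    apply/andP/andP => -[h1 h2]; split; lia.
- subst k.
  rewrite ?subn0 ?subn1; case: (leqP a z) => az /=; rewrite ?add0n ?add1n;
    apply/andP/andP => -[h1 h2]; split; lia.
Qed.

Lemma hatE d (w : {perm 'I_d.+1}) a z : w (lift a z) = lift (w a) (hat w a z).
Proof.
rewrite /hat permE /hatf.
have ne : w a != w (lift a z) by rewrite (inj_eq perm_inj) neq_lift.
by case: (unlift_some ne) => k -> ->.
Qed.

Lemma ltn_lift n (h : 'I_n) (x y : 'I_n.-1) : (lift h x < lift h y)%N = (x < y)%N.
Proof. by rewrite /= !ltnNge leq_bump2. Qed.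

Lemma split_sum d (a : 'I_d.+1) (F : 'I_d.+1 -> nat) :
  (\sum_x F x = F a + \sum_(z < d) F (lift a z))%N.
Proof. by rewrite (@bigD1_ord _ _ _ _ a xpredT). Qed.

Lemma bpos d n (b : 'I_n -> nat) i (a : 'I_d.+1) : a \in Bset d.+1 b i -> (0 < b i)%N.
Proof. rewrite inE; lia. Qed.

Lemma bn_lift d n (b : 'I_n -> nat) i (a : 'I_d.+1) (z : 'I_d) :
  (\sum_(k < n) b k)%N = d.+1 -> a \in Bset d.+1 b i ->
  bn (tdec b i) z = bn b (lift a z).
Proof.
move=> hb ha; have hb' := tdec_sum hb (bpos ha).
pose K := Ordinal (bn_lt z hb').
have : z \in Bset d (tdec b i) K by rewrite (memB _ _ hb').
by rewrite (mem_tdec _ _ ha) (memB _ _ hb) => /eqP ->.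
Qed.

Lemma bn_a d n (b : 'I_n -> nat) i (a : 'I_d.+1) :
  (\sum_(k < n) b k)%N = d.+1 -> a \in Bset d.+1 b i -> bn b a = i.
Proof. by move=> hb; rewrite (memB _ _ hb) => /eqP. Qed.

Lemma hat_good d n n' (b : 'I_n -> nat) (c : 'I_n' -> nat) i j (w : {perm 'I_d.+1}) a :
  (\sum_(k < n) b k)%N = d.+1 -> (\sum_(k < n') c k)%N = d.+1 ->
  a \in Bset d.+1 b i -> w a \in Bset d.+1 c j ->
  good b c w -> good (tdec b i) (tdec c j) (hat w a).
Proof.
move=> hb hc ha hwa G z1 z2 lt H.
rewrite !(bn_lift _ hb ha) !(bn_lift _ hc hwa) -!hatE in H.
have := G (lift a z1) (lift a z2) ltac:(by rewrite ltn_lift) H.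
by rewrite !hatE ltn_lift.
Qed.

Lemma hat_psi d n n' (b : 'I_n -> nat) (c : 'I_n' -> nat) i j (w : {perm 'I_d.+1}) a :
  (\sum_(k < n) b k)%N = d.+1 -> (\sum_(k < n') c k)%N = d.+1 ->
  a \in Bset d.+1 b i -> w a \in Bset d.+1 c j ->
  psi (tdec b i) (tdec c j) (hat w a) = mminus (psi b c w) i j.
Proof.
move=> hb hc ha hwa.
have hb' := tdec_sum hb (bpos ha); have hc' := tdec_sum hc (bpos hwa).
apply/matrixP => k l; rewrite /mminus mxE !psiE // (split_sum a).
rewrite (bn_a hb ha) (bn_a hc hwa) !ord_eqE (eq_sym (nat_of_ord i)) (eq_sym (nat_of_ord j)).
rewrite addKn; apply: eq_bigr => z _.
by rewrite (bn_lift _ hb ha) (bn_lift _ hc hwa) -hatE.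
Qed.

Local Arguments lift : simpl never.

Lemma key (x a wx wa I J i j : nat) :
 x != a -> wx != wa ->
 (I < i) ==> (x < a) -> (i < I) ==> (a < x) ->
 (I == i) ==> (x < a) ==> (wa < wx) -> (I == i) ==> (a < x) ==> (wx < wa) ->
 (J < j) ==> (wx < wa) -> (j < J) ==> (wa < wx) ->
 (J == j) ==> (x < a) ==> (wa < wx) -> (J == j) ==> (a < x) ==> (wx < wa) ->
 [/\ ((I <= i) && (j <= J)) + ((i <= I) && (J <= j)) =
       ((a < x) && (wx < wa)) + ((x < a) && (wa < wx)) + ((I == i) && (J == j)),
     ((I < i) && (j <= J)) + ((i < I) && (J <= j)) + (I == i) =
       ((a < x) && (wx < wa)) + ((x < a) && (wa < wx))
   & ((I <= i) && (j < J)) + ((i <= I) && (J < j)) + (J == j) =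
       ((a < x) && (wx < wa)) + ((x < a) && (wa < wx))]%N.
Proof.
case: (ltngtP x a) => //; case: (ltngtP wx wa) => //;
case: (ltngtP I i) => //; case: (ltngtP J j) => //.
Qed.

Lemma ell_sum D (v : {perm 'I_D}) :
  ell v = (\sum_(p : 'I_D) \sum_(q : 'I_D) ((p < q)%N && (v q < v p)%N))%N.
Proof. by rewrite /ell card_setsum [RHS]pair_big. Qed.

Lemma ell_split d (w : {perm 'I_d.+1}) a :
  ell w = (ell (hat w a) + \sum_(z < d) (((a < lift a z)%N && (w (lift a z) < w a)%N)
                          + ((lift a z < a)%N && (w a < w (lift a z))%N)))%N.
Proof.
rewrite !ell_sum (split_sum a).
rewrite (split_sum a (fun q => (a < q)%N && (w q < w a)%N)) ltnn andFb add0n.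
rewrite [X in _ + X = _](eq_bigr (fun z : 'I_d => ((lift a z < a)%N && (w a < w (lift a z))%N) + \sum_(z0 < d) ((lift a z < lift a z0)%N && (w (lift a z0) < w (lift a z))%N))%N); last by move=> z _; rewrite (split_sum a).
rewrite big_split /= big_split /=.
have -> : (\sum_(z < d) \sum_(z0 < d) ((lift a z < lift a z0)%N && (w (lift a z0) < w (lift a z))%N) =
   \sum_(p : 'I_d) \sum_(q : 'I_d) ((p < q)%N && (hat w a q < hat w a p)%N))%N.
  by apply: eq_bigr => z _; apply: eq_bigr => z' _; rewrite ltn_lift !hatE ltn_lift.
by rewrite [RHS]addnC addnA.
Qed.

Lemma good_facts D n n' (b : 'I_n -> nat) (c : 'I_n' -> nat) (w : {perm 'I_D}) (x y : 'I_D) :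
  (\sum_(k < n) b k)%N = D -> (\sum_(k < n') c k)%N = D -> good b c w ->
  [/\ (bn b x < bn b y)%N ==> (x < y)%N,
      (bn b x == bn b y) ==> (x < y)%N ==> (w y < w x)%N,
      (bn c (w x) < bn c (w y))%N ==> (w x < w y)%N
    & (bn c (w x) == bn c (w y)) ==> (x < y)%N ==> (w y < w x)%N].
Proof.
move=> hb hc G; split.
- apply/implyP => h; rewrite ltnNge; apply/negP => le; have := bn_mono hb le; by rewrite leqNgt h.
- apply/implyP => /eqP e; apply/implyP => xy; exact: G x y xy (or_introl e).
- apply/implyP => h; rewrite ltnNge; apply/negP => le; have := bn_mono hc le; by rewrite leqNgt h.
- apply/implyP => /eqP e; apply/implyP => xy; exact: G x y xy (or_intror e).
Qed.

Lemma key_x d n n' (b : 'I_n -> nat) (c : 'I_n' -> nat) (w : {perm 'I_d.+1}) (x a : 'I_d.+1) :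
  (\sum_(k < n) b k)%N = d.+1 -> (\sum_(k < n') c k)%N = d.+1 -> good b c w -> x != a ->
  let I := bn b x in let J := bn c (w x) in let i := bn b a in let j := bn c (w a) in
  [/\ ((I <= i) && (j <= J)) + ((i <= I) && (J <= j)) =
       ((a < x) && (w x < w a)) + ((x < a) && (w a < w x)) + ((I == i) && (J == j)),
     ((I < i) && (j <= J)) + ((i < I) && (J <= j)) + (I == i) =
       ((a < x) && (w x < w a)) + ((x < a) && (w a < w x))
   & ((I <= i) && (j < J)) + ((i <= I) && (J < j)) + (J == j) =
       ((a < x) && (w x < w a)) + ((x < a) && (w a < w x))]%N.
Proof.
move=> hb hc G hx I J i j.
have [f1 f2 f3 f4] := good_facts x a hb hc G.
have [g1 g2 g3 g4] := good_facts a x hb hc G.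
rewrite eq_sym in g2; rewrite eq_sym in g4.
apply: key => //.
by rewrite -ord_eqE (inj_eq perm_inj).
Qed.

Close Scope group_scope.
Unset Implicit Arguments.
Import GRing.Theory.
Local Open Scope ring_scope.

Theorem proposition2p7 (d n n' : nat) (b : 'I_n -> nat) (c : 'I_n' -> nat)
  (m : 'M[nat]_(n, n')) (i : 'I_n) (j : 'I_n') (a : 'I_d.+1)
  (w : {perm 'I_d.+1}) (w' : {perm 'I_d}) :
  (\sum_(k < n) b k)%N = d.+1 ->
  (\sum_(k < n') c k)%N = d.+1 ->
  inM b c m ->
  longest b c m w ->
  a \in Bset d.+1 b i ->
  w a \in Bset d.+1 c j ->
  longest (tdec b i) (tdec c j) (mminus m i j) w' ->
  hat w a = w' /\
  [/\ (ell w)%:Z - (ell w')%:Z =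
        (msum m (fun i' => (i' <= i)%N) (fun j' => (j <= j')%N))%:Z
        + (msum m (fun i' => (i <= i')%N) (fun j' => (j' <= j)%N))%:Z
        - (m i j)%:Z - 1,
      (ell w)%:Z - (ell w')%:Z =
        (msum m (fun i' => (i' < i)%N) (fun j' => (j <= j')%N))%:Z
        + (msum m (fun i' => (i < i')%N) (fun j' => (j' <= j)%N))%:Z
        + (b i)%:Z - 1
    & (ell w)%:Z - (ell w')%:Z =
        (msum m (fun i' => (i' <= i)%N) (fun j' => (j < j')%N))%:Z
        + (msum m (fun i' => (i <= i')%N) (fun j' => (j' < j)%N))%:Z
        + (c j)%:Z - 1].
Proof.
move=> hb hc [hrow hcol] L ha hwa L'.
have G := longest_good hb hc L.
have hb' := tdec_sum hb (bpos ha); have hc' := tdec_sum hc (bpos hwa).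
case: (L) => Lp _; case: (L') => Lp' _.
have Hhat : hat w a = w'.
  apply: (good_uniq hb' hc' (hat_good hb hc ha hwa G) (longest_good hb' hc' L')).
  by rewrite hat_psi // Lp Lp'.
split => //; subst w'.
have ia := bn_a hb ha; have ja := bn_a hc hwa.
set N := (\sum_(z < d) (((a < lift a z)%N && (w (lift a z) < w a)%N)
                          + ((lift a z < a)%N && (w a < w (lift a z))%N)))%N.
have Eell := ell_split w a; rewrite -/N in Eell.
have Ebi : b i = (\sum_(x : 'I_d.+1) (bn b x == i))%N.
  have := msumE w (fun k => k == i)%N (fun _ => true) hb hc.
  rewrite /msum Lp (big_pred1 i) // hrow => ->.
  by apply: eq_bigr => x _; rewrite andbT.
have Ecj : c j = (\sum_(x : 'I_d.+1) (bn c (w x) == j))%N.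
  have := msumE w (fun _ => true) (fun k => k == j)%N hb hc.
  rewrite /msum Lp exchange_big (big_pred1 j) // hcol => ->.
  by apply: eq_bigr.
have Emij : m i j = (\sum_(x : 'I_d.+1) ((bn b x == i) && (bn c (w x) == j)))%N by rewrite -Lp psiE.
have e1 := msumE w (fun k => (k <= i)%N) (fun k => (j <= k)%N) hb hc.
have e2 := msumE w (fun k => (i <= k)%N) (fun k => (k <= j)%N) hb hc.
have e3 := msumE w (fun k => (k < i)%N) (fun k => (j <= k)%N) hb hc.
have e4 := msumE w (fun k => (i < k)%N) (fun k => (k <= j)%N) hb hc.
have e5 := msumE w (fun k => (k <= i)%N) (fun k => (j < k)%N) hb hc.
have e6 := msumE w (fun k => (i <= k)%N) (fun k => (k < j)%N) hb hc.
rewrite Lp /= in e1 e2 e3 e4 e5 e6.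
rewrite e1 e2 e3 e4 e5 e6 Ebi Ecj Emij Eell.
rewrite !(split_sum a) /= ia ja !leqnn !ltnn !eqxx /=.
have K z := key_x hb hc G (negbT (lift_eqF a z)).
have S1 : (\sum_(z < d) ((bn b (lift a z) <= i) && (j <= bn c (w (lift a z))))
          + \sum_(z < d) ((i <= bn b (lift a z)) && (bn c (w (lift a z)) <= j))
          = N + \sum_(z < d) ((bn b (lift a z) == i) && (bn c (w (lift a z)) == j)))%N.
  rewrite -!big_split; apply: eq_bigr => z _.
  by move: (K z) => /=; rewrite ia ja => -[-> _ _].
have S2 : (\sum_(z < d) ((bn b (lift a z) < i) && (j <= bn c (w (lift a z))))
          + \sum_(z < d) ((i < bn b (lift a z)) && (bn c (w (lift a z)) <= j))
          + \sum_(z < d) (bn b (lift a z) == i) = N)%N.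
  rewrite -!big_split; apply: eq_bigr => z _.
  by move: (K z) => /=; rewrite ia ja => -[_ -> _].
have S3 : (\sum_(z < d) ((bn b (lift a z) <= i) && (j < bn c (w (lift a z))))
          + \sum_(z < d) ((i <= bn b (lift a z)) && (bn c (w (lift a z)) < j))
          + \sum_(z < d) (bn c (w (lift a z)) == j) = N)%N.
  rewrite -!big_split; apply: eq_bigr => z _.
  by move: (K z) => /=; rewrite ia ja => -[_ _ ->].
clearbody N; clear K e1 e2 e3 e4 e5 e6 Ebi Ecj Emij Eell.
move: S1 S2 S3 => /= S1 S2 S3.
split; lia.
Qed.
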